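(* Let $p>1$, $c\in(0,1]$, $X\subset\mathbb{R}^n$, $f(x)=\mathbb{E}[F(x,\xi)]$, and for $x\in X$, $y\in\mathbb{R}$, $z>0$ let \[ \phi(x,y,z)=\frac{c}{z^{p-1}}\mathbb{E}[(F(x,\xi)-y)_+^p]+y+c(p-1)p^{-\frac p{p-1}}z,\qquad h(x)=f(x)+c\,\mathbb{E}^{1/p}[(F(x,\xi)-f(x))_+^p]. \] Then for any $x\in X$ and $y\in\mathbb{R}$, $\Phi(x,y):=\inf_{z>0}\phi(x,y,z)$ is attained at $z=p^{\frac1{p-1}}\mathbb{E}^{1/p}[(F(x,\xi)-y)_+^p]$. Moreover, for any $x\in X$, $\inf_{y\ge f(x),z>0}\phi(x,y,z)=\inf_{y\ge f(x)}\Phi(x,y)=h(x)$, attained at $y=f(x)$ and $z=p^{\frac1{p-1}}\mathbb{E}^{1/p}[(F(x,\xi)-f(x))_+^p]$.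
   Context: $(a)_+=\max\{a,0\}$; $F(x,\xi)$ has finite $p$-th moment for each $x$. *)

(* Defs.v *)
From HB Require Import structures.
From mathcomp Require Import all_boot all_order all_algebra.
From mathcomp Require Import all_classical all_reals all_analysis.
Set Implicit Arguments. Unset Strict Implicit. Unset Printing Implicit Defensive.
Import Order.TTheory GRing.Theory Num.Theory.
Local Open Scope classical_set_scope.
Local Open Scope ring_scope.

Definition expect d (T : measurableType d) (R : realType)
  (P : probability T R) (g : T -> R) : R :=
  fine (\int[P]_w (g w)%:E)%E.

Definition pospart (R : realType) (a : R) : R := Num.max a 0.

(* Main.v *)
Require Import Defs.
From HB Require Import structures.
From mathcomp Require Import all_boot all_order all_algebra.
From mathcomp Require Import all_classical all_reals all_analysis.
From mathcomp Require Import ring lra.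
From mathcomp Require Import measurable_realfun.
Import Order.TTheory GRing.Theory Num.Theory.
Local Open Scope classical_set_scope.
Local Open Scope ring_scope.

Section real.
Variable R : realType.
Implicit Types p t a z y c : R.

Lemma young_t {p t} : 1 < p -> 0 < t ->
  1 <= (t `^ (p-1))^-1 / p + t * (p-1) / p.
Proof.
move=> p1 t0.
have p0 : 0 < p by lra.
have q0 : 0 < p / (p-1) by apply: divr_gt0; lra.
have pn0 : p != 0 by rewrite gt_eqF.
have qn0 : p - 1 != 0 by rewrite gt_eqF // subr_gt0.
have := @conjugate_powR R (t `^ (- ((p-1)/p))) (t `^ ((p-1)/p)) p (p/(p-1))
  (powR_ge0 _ _) (powR_ge0 _ _) p0 q0.
rewrite -powRD; last by apply/implyP => _; rewrite gt_eqF.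
rewrite addNr powRr0 -!powRrM.
have -> : - ((p - 1) / p) * p = - (p-1).
  by field; rewrite ?pn0 ?qn0.
have -> : (p - 1) / p * (p / (p - 1)) = 1 by field; rewrite ?pn0 ?qn0.
rewrite powRN powRr1; last lra.
have -> : t / (p / (p - 1)) = t * (p-1) / p by field; rewrite ?pn0 ?qn0.
by apply; field; rewrite ?pn0 ?qn0.
Qed.

Lemma inf_eqP (E : set R) m : E !=set0 -> lbound E m ->
  (forall e, 0 < e -> exists2 x, E x & x < m + e) -> inf E = m.
Proof.
move=> E0 lb ap; apply/eqP; rewrite eq_le lb_le_inf // andbT.
rewrite leNgt; apply/negP => mi.
have := ap (inf E - m); rewrite subr_gt0 => /(_ mi) [x Ex xlt].
have hl : has_lbound E by exists m.
have := ge_inf hl Ex.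
rewrite addrC subrK in xlt; lra.
Qed.

Section phi.
Variables (p c a y : R).
Hypotheses (p1 : 1 < p) (c0 : 0 < c) (a0 : 0 <= a).
Let phi z := c / z `^ (p - 1) * a + y + c * (p - 1) * p `^ (- (p / (p - 1))) * z.
Let p0 : 0 < p. Proof. exact: lt_trans ltr01 p1. Qed.
Let pn0 : p != 0. Proof. by rewrite gt_eqF. Qed.
Let qn0 : p - 1 != 0. Proof. by rewrite gt_eqF // subr_gt0. Qed.
Let u := p `^ ((p-1)^-1).
Let u0 : 0 < u. Proof. exact: powR_gt0. Qed.
Let hF2 : p `^ (- (p / (p - 1))) = p^-1 / u.
Proof.
apply: (@mulIf _ u); first by rewrite gt_eqF.
rewrite divfK ?gt_eqF // /u -powRD; last by apply/implyP => _.
have -> : - (p / (p - 1)) + (p - 1)^-1 = -1 by field; rewrite ?pn0 ?qn0.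
by rewrite powR_inv1 // ltW.
Qed.
Let hu : u `^ (p-1) = p.
Proof. by rewrite /u -powRrM mulVf // powRr1 // ltW. Qed.
Let K0 : 0 < c * (p - 1) * p `^ (- (p / (p - 1))).
Proof. by rewrite !mulr_gt0 ?powR_gt0 // subr_gt0. Qed.

Lemma phi_lowb z : 0 < z -> y + c * a `^ p^-1 <= phi z.
Proof.
move=> z0; rewrite /phi.
have Kz : 0 <= c * (p - 1) * p `^ (- (p / (p - 1))) * z by rewrite ltW // mulr_gt0.
move: a0; rewrite le_eqVlt => /predU1P[<-|ap].
  rewrite powR0 ?invr_neq0 // mulr0 mulr0; lra.
set s := a `^ p^-1.
have s0 : 0 < s by rewrite powR_gt0.
set v := s `^ (p-1).
have v0 : 0 < v by rewrite powR_gt0.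
have hA : a = s * v.
  by rewrite /v mulr_powRB1 ?ltW // ?subr_gt0 // /s -powRrM mulVf // powRr1 // ltW.
set w := z `^ (p-1).
have w0 : 0 < w by rewrite powR_gt0.
have ht : (z / (u * s)) `^ (p-1) = w / (p * v).
  rewrite powRM ?ltW ?invr_gt0 ?mulr_gt0 //.
  rewrite -[(u * s)^-1]powR_inv1 ?ltW ?mulr_gt0 //.
  rewrite -powRrM (mulrC (-1)) powRrM powR_inv1 ?powR_ge0 //.
  rewrite powRM ?ltW // hu /w /v; field.
  by rewrite ?gt_eqF ?powR_gt0.
have zt0 : 0 < z / (u * s) by rewrite divr_gt0 // mulr_gt0.
have := young_t p1 zt0.
rewrite ht => yg.
have := ler_wpM2l (ltW (mulr_gt0 c0 s0)) yg.
have E : c / w * (s * v) + c * (p - 1) * (p^-1 / u) * z =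
  c * s * ((w / (p * v))^-1 / p + z / (u * s) * (p - 1) / p).
  by field; rewrite ?pn0 ?gt_eqF.
rewrite mulr1 -E hF2 -hA; lra.
Qed.

Lemma phi_opt : 0 < a -> phi (u * a `^ p^-1) = y + c * a `^ p^-1.
Proof.
move=> ap; rewrite /phi.
set s := a `^ p^-1.
have s0 : 0 < s by rewrite powR_gt0.
set v := s `^ (p-1).
have v0 : 0 < v by rewrite powR_gt0.
have hA : a = s * v.
  by rewrite /v mulr_powRB1 ?ltW // ?subr_gt0 // /s -powRrM mulVf // powRr1 // ltW.
rewrite powRM ?ltW // hu hF2 {1}hA -/v.
by field; rewrite ?pn0 ?gt_eqF.
Qed.

Lemma Phi_eq : inf [set phi z | z in [set z | 0 < z]] = y + c * a `^ p^-1.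
Proof.
apply: inf_eqP.
- by exists (phi 1); exists 1 => //=; rewrite ltr01.
- by move=> _ [z z0 <-]; exact: phi_lowb.
move=> e e0.
move: a0; rewrite le_eqVlt => /predU1P[a00|ap].
  set K := c * (p - 1) * p `^ (- (p / (p - 1))).
  exists (phi (e / (2 * K))).
    by exists (e / (2 * K)) => //; rewrite /= divr_gt0 // mulr_gt0.
  rewrite /phi -/K -a00 powR0 ?invr_neq0 // !mulr0.
  have -> : K * (e / (2 * K)) = e / 2 by field; rewrite gt_eqF.
  lra.
exists (phi (u * a `^ p^-1)).
  by exists (u * a `^ p^-1) => //; rewrite /= mulr_gt0 // powR_gt0.
rewrite phi_opt //; lra.
Qed.
End phi.
End real.

Section meas.
Context d (T : measurableType d) (R : realType) (P : probability T R).
Variable p : R.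
Hypothesis p1 : 1 < p.
Let p0 : 0 < p. Proof. exact: lt_trans ltr01 p1. Qed.
Let pn0 : p != 0. Proof. by rewrite gt_eqF. Qed.

Local Notation N f := (Lnorm P p%:E (EFin \o f)).

Lemma LnormE (f : T -> R) :
  N f = ((\int[P]_x (`|f x| `^ p)%:E) `^ p^-1)%E.
Proof.
by rewrite unlock.
Qed.

Let mpow (f : T -> R) : measurable_fun setT f ->
  measurable_fun [set: T] (fun x => ((`|f x| `^ p)%:E : \bar R)).
Proof.
move=> mf; apply/measurable_EFinP.
apply: (@measurableT_comp _ _ _ _ _ _ (@powR R ^~ p)) => //.
exact: measurableT_comp.
Qed.

Lemma Lnorm_le (f g : T -> R) : measurable_fun setT f -> measurable_fun setT g ->
  (forall x, `|f x| <= `|g x|) -> (N f <= N g)%E.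
Proof.
move=> mf mg fg; rewrite !LnormE.
have r0 : 0 <= p^-1 by rewrite invr_ge0 ltW.
apply: (gt0_ler_poweR r0).
- by rewrite in_itv /= leey andbT integral_ge0 // => x _; rewrite lee_fin powR_ge0.
- by rewrite in_itv /= leey andbT integral_ge0 // => x _; rewrite lee_fin powR_ge0.
apply: ge0_le_integral => //.
- apply/measurable_EFinP; apply: (measurableT_comp (measurable_powR _)) => //; exact: measurableT_comp.
- apply/measurable_EFinP; apply: (measurableT_comp (measurable_powR _)) => //; exact: measurableT_comp.
move=> x _; rewrite lee_fin; apply: ge0_ler_powR => //. all: try by rewrite nnegrE normr_ge0. all: try exact: ltW.
Qed.

Lemma Lnorm_cst (r : R) : 0 <= r -> N (cst r) = r%:E.
Proof.
move=> r0; rewrite LnormE.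
rewrite (_ : (fun x => (`|cst r x| `^ p)%:E) = cst (`|r| `^ p)%:E) //.
rewrite integral_cst //.
set m := (X in (_ * X)%E).
have -> : m = 1%E by rewrite /m; exact: probability_setT.
rewrite mule1 poweR_EFin.
by rewrite -powRrM mulfV // powRr1 ger0_norm.
Qed.

Lemma Lnorm_fin_int (f : T -> R) : (N f < +oo)%E ->
  (\int[P]_x (`|f x| `^ p)%:E < +oo)%E.
Proof.
by move=> h; rewrite LnormE in h; apply: (lty_poweRy _ h); rewrite invr_neq0.
Qed.

Lemma int_fin_Lnorm (f : T -> R) : (\int[P]_x (`|f x| `^ p)%:E < +oo)%E -> (N f < +oo)%E.
Proof. by move=> h; rewrite LnormE poweR_lty. Qed.


Variable G : T -> R.
Hypothesis mG : measurable_fun setT G.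
Hypothesis iG : P.-integrable setT (fun w => (`|G w| `^ p)%:E).

Let g y := fun w => pospart (G w - y).

Lemma mg y : measurable_fun setT (g y).
Proof.
rewrite /g /pospart; apply: measurable_maxr => //.
exact: measurable_funB.
Qed.

Lemma g_ge0 y w : 0 <= g y w.
Proof. by rewrite /g /pospart le_max lexx orbT. Qed.

Lemma NG_fin : (N G < +oo)%E.
Proof.
apply: int_fin_Lnorm; move/integrableP: iG => [_].
suff -> : (\int[P]_x `|(`|G x| `^ p)%:E|)%E = (\int[P]_x (`|G x| `^ p)%:E)%E by [].
by apply: eq_integral => x _; rewrite abse_EFin ger0_norm ?powR_ge0.
Qed.

Lemma g_fin y : (N (g y) < +oo)%E.
Proof.
have mGn : measurable_fun setT (fun w => `|G w|) by exact: measurableT_comp.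
apply: (@le_lt_trans _ _ (N (fun w => `|G w| + `|y|))).
  apply: Lnorm_le; first exact: mg.
    by apply: measurable_funD.
  move=> w; rewrite ger0_norm ?g_ge0 // ger0_norm ?addr_ge0 //.
  rewrite /g /pospart ge_max; apply/andP; split; last by rewrite addr_ge0.
  have := ler_norm (G w); have := ler_norm (- y); rewrite normrN; lra.
apply: (@le_lt_trans _ _ (N (fun w => `|G w|%R) + N (cst `|y|%R))%E).
  exact: (@minkowski_EFin _ _ _ P (fun w => `|G w|) (cst `|y|) p mGn (measurable_cst _) (ltW p1)).
rewrite Lnorm_cst // lte_add_pinfty // ?ltry //.
rewrite LnormE; under eq_integral do rewrite normr_id; rewrite -LnormE.
exact: NG_fin.
Qed.

Lemma g_step y y' : y <= y' -> (N (g y) <= N (g y') + (y' - y)%:E)%E.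
Proof.
move=> yy.
apply: (@le_trans _ _ (N (fun w => g y' w + (y' - y)))).
  apply: Lnorm_le; [exact: mg| |].
    by apply: measurable_funD => //; exact: mg.
  move=> w; rewrite ger0_norm ?g_ge0 // ger0_norm; last by rewrite addr_ge0 ?g_ge0 // subr_ge0.
  rewrite /g /pospart ge_max; apply/andP; split.
    have : G w - y' <= Num.max (G w - y') 0 by rewrite le_max lexx.
    lra.
  have : 0 <= Num.max (G w - y') 0 by rewrite le_max lexx orbT.
  lra.
rewrite -(@Lnorm_cst (y' - y)) ?subr_ge0 //.
exact: (@minkowski_EFin _ _ _ P (g y') (cst (y' - y)) p (mg y') (measurable_cst _) (ltW p1)).
Qed.

Let A y := fine (\int[P]_w (pospart (G w - y) `^ p)%:E)%E.

Lemma A_ge0 y : 0 <= A y.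
Proof. by apply: fine_ge0; apply: integral_ge0 => w _; rewrite lee_fin powR_ge0. Qed.

Lemma Apow y : fine (N (g y)) = A y `^ p^-1.
Proof.
rewrite LnormE fine_poweR /A; congr (fine _ `^ _).
by apply: eq_integral => w _; rewrite ger0_norm ?g_ge0.
Qed.

Lemma A_mono (c : R) y y' : 0 < c <= 1 -> y <= y' ->
  y + c * A y `^ p^-1 <= y' + c * A y' `^ p^-1.
Proof.
move=> /andP[c0 c1] yy.
rewrite -!Apow.
have h := @g_step y y' yy.
have f1 := g_fin y; have f2 := g_fin y'.
have e1 : N (g y) = (fine (N (g y)))%:E by rewrite fineK // ge0_fin_numE ?Lnorm_ge0.
have e2 : N (g y') = (fine (N (g y')))%:E by rewrite fineK // ge0_fin_numE ?Lnorm_ge0.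
move: h; rewrite e1 e2 -EFinD lee_fin /=.
have n1 : 0 <= fine (N (g y)) by apply: fine_ge0; exact: Lnorm_ge0.
have n2 : 0 <= fine (N (g y')) by apply: fine_ge0; exact: Lnorm_ge0.
move: n1 n2; set a := fine (N (g y)); set b := fine (N (g y')) => n1 n2 h.
have [ab|ba] := leP a b.
  have : c * a <= c * b by rewrite ler_wpM2l // ltW.
  lra.
have : 0 <= (1 - c) * (a - b) by rewrite mulr_ge0 // subr_ge0 // ltW.
lra.
Qed.
End meas.

Theorem lemma13 (n : nat) (d : measure_display) (T : measurableType d)
  (R : realType) (P : probability T R) (F : 'rV[R]_n -> T -> R)
  (X : set 'rV[R]_n) (p c : R) :
  1 < p -> 0 < c <= 1 ->
  (forall x, measurable_fun setT (F x)) ->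
  (forall x, P.-integrable setT (fun w => (`|F x w| `^ p)%:E)) ->
  let f := fun x => expect P (F x) in
  let A := fun x y => expect P (fun w => pospart (F x w - y) `^ p) in
  let phi := fun x y z =>
    c / z `^ (p - 1) * A x y + y + c * (p - 1) * p `^ (- (p / (p - 1))) * z in
  let Phi := fun x y => inf [set phi x y z | z in [set z : R | 0 < z]] in
  let h := fun x => f x + c * (A x (f x)) `^ (p^-1) in
  let zopt := fun x y => p `^ ((p - 1)^-1) * (A x y) `^ (p^-1) in
  forall x, x \in X ->
    (forall y, 0 < zopt x y -> Phi x y = phi x y (zopt x y)) /\
    inf [set phi x yz.1 yz.2 | yz in [set yz : R * R | f x <= yz.1 /\ 0 < yz.2]]
      = inf [set Phi x y | y in [set y : R | f x <= y]] /\
    inf [set Phi x y | y in [set y : R | f x <= y]] = h x /\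
    Phi x (f x) = h x /\
    (0 < zopt x (f x) -> phi x (f x) (zopt x (f x)) = h x).
Proof.
move=> p1 /andP[c0 c1] mF iF f A phi Phi h zopt x _.
have Age0 : forall y, 0 <= A x y.
  move=> y; exact: (@A_ge0 _ _ _ P p (F x) y).
have hPhi : forall y, Phi x y = y + c * A x y `^ p^-1.
  move=> y; exact: (@Phi_eq R p c (A x y) y p1 c0 (Age0 y)).
have Apos : forall y, 0 < zopt x y -> 0 < A x y.
  move=> y; rewrite /zopt; have := Age0 y; rewrite le_eqVlt => /predU1P[<-|//].
  by rewrite powR0 ?invr_neq0 ?gt_eqF ?(lt_trans ltr01 p1) // mulr0 ltxx.
have mono : forall y, f x <= y -> h x <= y + c * A x y `^ p^-1.
  move=> y fy; rewrite /h.
  exact: (@A_mono _ _ _ P p p1 (F x) (mF x) (iF x) c (f x) y (ltac:(by rewrite c0 c1)) fy).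
have part3 : inf [set Phi x y | y in [set y : R | f x <= y]] = h x.
  apply: inf_eqP.
  - by exists (Phi x (f x)); exists (f x) => //=.
  - by move=> _ [y fy <-]; rewrite hPhi; exact: mono.
  move=> e e0; exists (Phi x (f x)); first by exists (f x) => //=.
  rewrite hPhi /h; lra.
have part4 : Phi x (f x) = h x by rewrite hPhi.
split.
  move=> y zy; rewrite hPhi; symmetry; rewrite /phi /zopt.
  by apply: (@phi_opt R p c (A x y) y); [exact: p1 | exact: Age0 | exact: Apos].
split.
  rewrite part3; apply: inf_eqP.
  - by exists (phi x (f x) 1); exists (f x, 1) => //=; split => //; rewrite ltr01.
  - move=> _ [[y z] /= [fy z0] <-].
    apply: le_trans (mono y fy) _.
    exact: (@phi_lowb R p c (A x y) y p1 c0 (Age0 y) z z0).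
  move=> e e0.
  have : inf [set phi x (f x) z | z in [set z : R | 0 < z]] < h x + e.
    by rewrite -/(Phi x (f x)) part4; lra.
  move=> /inf_lt [].
    by exists (phi x (f x) 1); exists 1 => //=; rewrite ltr01.
  move=> _ [z z0 <-] lt; exists (phi x (f x) z) => //.
  by exists (f x, z).
split; first exact: part3.
split; first exact: part4.
move=> zp; rewrite /h /phi /zopt -/(A x (f x)).
apply: (@phi_opt R p c (A x (f x)) (f x)).
all: first [exact: p1 | exact: c0 | exact: Age0 | exact: (Apos _ zp)].
Qed.
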